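(* Let $f:(R,\mathfrak{m})\to(S,\mathfrak{n})$ be a flat homomorphism of finite length of Noetherian local rings. Let $\varphi$ be a self-map of finite length of $R$, and let $\psi$ be a ring endomorphism of $S$ with $\psi\circ f=f\circ\varphi$. Then $\psi$ is a self-map of finite length of $S$ and $h_{\mathrm{alg}}(\varphi,R)=h_{\mathrm{alg}}(\psi,S)$.
   Context: A homomorphism $g:(A,\mathfrak{a})\to(B,\mathfrak{b})$ of Noetherian local rings is of finite length if it is local and $g(\mathfrak{a})B$ is $\mathfrak{b}$-primary; its length is $\lambda(g):=\ell_B(B/g(\mathfrak{a})B)$. A self-map of finite length is an endomorphism that is of finite length; its iterates are then of finite length. The algebraic entropy of a self-map of finite length $\varphi$ of $R$ is $h_{\mathrm{alg}}(\varphi,R):=\lim_{n\to\infty}\frac1n\log\lambda(\varphi^n)$ (the limit exists). *)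

(* Defs.v *)
From HB Require Import structures.
From mathcomp Require Import all_boot all_algebra.
From Stdlib Require Import Reals ClassicalEpsilon.

Set Implicit Arguments.
Unset Strict Implicit.
Unset Printing Implicit Defensive.
Import GRing.Theory.

Local Open Scope ring_scope.

Definition is_ideal (A : comNzRingType) (I : A -> Prop) : Prop :=
  [/\ I 0, (forall x y, I x -> I y -> I (x + y)) &
      (forall r x, I x -> I (r * x))].

Definition proper_ideal (A : comNzRingType) (I : A -> Prop) : Prop :=
  is_ideal I /\ ~ I 1.

Definition maximal_ideal (A : comNzRingType) (m : A -> Prop) : Prop :=
  proper_ideal m /\
  forall J : A -> Prop, proper_ideal J -> (forall x, m x -> J x) ->
    forall x, J x -> m x.

Definition noetherian (A : comNzRingType) : Prop :=
  forall C : nat -> A -> Prop,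
    (forall n, is_ideal (C n)) ->
    (forall n x, C n x -> C n.+1 x) ->
    exists N : nat, forall n : nat, leq N n -> forall x, C n x -> C N x.

Definition local_ring (A : comNzRingType) : Prop :=
  exists m : A -> Prop, maximal_ideal m /\
    forall m' : A -> Prop, maximal_ideal m' -> forall x, m' x <-> m x.

Definition noetherian_local (A : comNzRingType) : Prop :=
  noetherian A /\ local_ring A.

Definition ext_ideal (A B : comNzRingType) (g : A -> B) (I : A -> Prop) : B -> Prop :=
  fun y => exists (s : seq (B * A)),
    (forall p, p \in s -> I p.2) /\ y = \sum_(p <- s) p.1 * g p.2.

Definition primary_to (A : comNzRingType) (m I : A -> Prop) : Prop :=
  [/\ proper_ideal I,
      (forall x y, I (x * y) -> I x \/ exists n, I (y ^+ n)) &
      (forall x, m x <-> exists n, I (x ^+ n))].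

(* Length of the A-module A/I: submodules of A/I correspond to ideals of A
   containing I, so ell_A(A/I) = n means that n is the largest number of
   strict inclusions in a chain of such ideals. *)
Definition ideal_chain (A : comNzRingType) (I : A -> Prop) (n : nat)
    (C : nat -> A -> Prop) : Prop :=
  (forall i : nat, leq i n -> is_ideal (C i) /\ forall x, I x -> C i x) /\
  (forall i : nat, leq i.+1 n ->
     (forall x, C i x -> C i.+1 x) /\ exists x, C i.+1 x /\ ~ C i x).

Definition quotient_length_is (A : comNzRingType) (I : A -> Prop) (n : nat) : Prop :=
  (exists C, ideal_chain I n C) /\
  (forall (k : nat) C, ideal_chain I k C -> leq k n).

Definition quotient_length (A : comNzRingType) (I : A -> Prop) : nat :=
  epsilon (inhabits O) (fun n => quotient_length_is I n).

Definition finite_length_hom (A B : comNzRingType) (g : A -> B) : Prop :=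
  forall (a : A -> Prop) (b : B -> Prop), maximal_ideal a -> maximal_ideal b ->
    (forall x, a x -> b (g x)) /\ primary_to b (ext_ideal g a).

Definition hom_length (A B : comNzRingType) (g : A -> B) : nat :=
  epsilon (inhabits O)
    (fun n => exists a : A -> Prop, maximal_ideal a /\
                quotient_length_is (ext_ideal g a) n).

Definition self_map_finite_length (A : comNzRingType) (phi : {rmorphism A -> A}) : Prop :=
  finite_length_hom phi.

(* h_alg(phi) := lim_{n -> oo} (1/n) log lambda(phi^n), indexed from n = 1. *)
Definition h_alg (A : comNzRingType) (phi : A -> A) : Rdefinitions.R :=
  epsilon (inhabits (IZR 0))
    (fun h => Un_cv (fun n => Rdiv (ln (INR (hom_length (iter n.+1 phi))))
                                   (INR n.+1)) h).

(* R-flatness of B via g, stated by the equational criterion of flatness. *)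
Definition flat_via (A B : comNzRingType) (g : A -> B) : Prop :=
  forall (n : nat) (f : 'I_n -> A) (x : 'I_n -> B),
    \sum_(i < n) g (f i) * x i = 0 ->
    exists (m : nat) (a : 'I_n -> 'I_m -> A) (y : 'I_m -> B),
      (forall i, x i = \sum_(j < m) g (a i j) * y j) /\
      (forall j, \sum_(i < n) f i * a i j = 0).

(* Main.v *)
Require Import Defs.
From HB Require Import structures.
From mathcomp Require Import all_boot all_algebra.
From mathcomp Require Import zify.
From Stdlib Require Import Reals Lra Lia ClassicalEpsilon FunctionalExtensionality PropExtensionality Classical.
Set Implicit Arguments.
Unset Strict Implicit.
Unset Printing Implicit Defensive.
Import GRing.Theory.

Section RealPart.
Local Open Scope R_scope.

Lemma ln_le' (x y : R) : 0 < x -> x <= y -> ln x <= ln y.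
Proof.
move=> Hx Hxy; case: (Rle_lt_or_eq_dec _ _ Hxy) => H.
  by apply: Rlt_le; apply: ln_increasing.
by rewrite H; apply: Rle_refl.
Qed.

Lemma cv_transfer (a b : nat -> R) (c h : R) :
  (forall n, 1 <= a n) -> (forall n, 1 <= b n) -> 1 <= c ->
  (forall n, b n <= c * a n) -> (forall n, a n <= c * b n) ->
  Un_cv (fun n => Rdiv (ln (a n)) (INR n.+1)) h ->
  Un_cv (fun n => Rdiv (ln (b n)) (INR n.+1)) h.
Proof.
move=> Ha Hb Hc Hba Hab Hu eps Heps.
have Hlc : 0 <= ln c by rewrite -ln_1; apply: ln_le'; lra.
have Hd : forall n, Rabs (ln (b n) - ln (a n)) <= ln c.
  move=> n; have Ha0 : 0 < a n by have := Ha n; lra.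
  have Hb0 : 0 < b n by have := Hb n; lra.
  have H1 : ln (b n) <= ln c + ln (a n).
    rewrite -ln_mult; [apply: ln_le'=> //; exact: Hba | lra | lra].
  have H2 : ln (a n) <= ln c + ln (b n).
    rewrite -ln_mult; [apply: ln_le'=> //; exact: Hab | lra | lra].
  by apply: Rabs_le; lra.
have He2 : 0 < eps / 2 by lra.
have [N1 HN1] := Hu _ He2.
have [N2 HN2] := INR_archimed (eps / 2) (ln c) He2.
exists (Nat.max N1 N2) => n Hn.
have Hn1 : (n >= N1)%coq_nat by lia.
have Hn2 : (n >= N2)%coq_nat by lia.
have := HN1 n Hn1; rewrite /R_dist => H1.
have Hdn := Hd n.
set d := INR n.+1 in H1 *.
have Hdpos : 0 < d by apply: lt_0_INR; lia.
have HdN : INR N2 <= d by apply: le_INR; lia.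
set w := ln (b n) / d - ln (a n) / d.
have Hw : w * d = ln (b n) - ln (a n) by rewrite /w; field; lra.
have Hwb : Rabs w < eps / 2.
  move: Hdn; rewrite -Hw => Hdn.
  have Hd1 : ln c < d * (eps / 2).
    have := Rmult_le_compat_r (eps / 2) _ _ (Rlt_le _ _ He2) HdN; lra.
  have [Hup Hlo] : w * d <= ln c /\ - ln c <= w * d.
    case: (Rcase_abs (w * d)) => Hs; [rewrite Rabs_left in Hdn | rewrite Rabs_right in Hdn]; lra.
  apply: Rabs_def1; nra.
have -> : ln (b n) / d - h = w + (ln (a n) / d - h) by rewrite /w; ring.
apply: Rle_lt_trans (Rabs_triang _ _) _; lra.
Qed.
End RealPart.

Local Open Scope ring_scope.

Section Ideals.
Variable A : comNzRingType.
Implicit Types (I J K : A -> Prop) (x y : A).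

Definition sub I J := forall x, I x -> J x.
Definition top : A -> Prop := fun _ => True.
Definition colon K x : A -> Prop := fun c => K (c * x).
Definition sumx K x : A -> Prop := fun y => exists k r, K k /\ y = k + r * x.
Definition radm (m J : A -> Prop) := forall x, m x -> exists k, J (x ^+ k).

Lemma id0 I : is_ideal I -> I 0. Proof. by case. Qed.
Lemma idD I x y : is_ideal I -> I x -> I y -> I (x + y). Proof. by case=> _ H _; apply: H. Qed.
Lemma idM I r x : is_ideal I -> I x -> I (r * x). Proof. by case=> _ _ H; apply: H. Qed.
Lemma idMr I r x : is_ideal I -> I x -> I (x * r). Proof. by move=> H Hx; rewrite mulrC; apply: idM. Qed.
Lemma idN I x : is_ideal I -> I x -> I (- x).
Proof. by move=> H Hx; rewrite -mulN1r; apply: idM. Qed.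
Lemma idB I x y : is_ideal I -> I x -> I y -> I (x - y).
Proof. by move=> H Hx Hy; apply: idD=> //; apply: idN. Qed.
Lemma id_one I x : is_ideal I -> I 1 -> I x.
Proof. by move=> H H1; rewrite -(mulr1 x); apply: idM. Qed.
Lemma idX I x k : is_ideal I -> I x -> I (x ^+ k.+1).
Proof. by move=> H Hx; rewrite exprSr; apply: idM. Qed.
Lemma idXle I x (k n : nat) : is_ideal I -> I (x ^+ k) -> leq k n -> I (x ^+ n).
Proof. by move=> H Hx kn; rewrite -(subnK kn) exprD; apply: idM. Qed.
Lemma idMn I x (n : nat) : is_ideal I -> I x -> I (x *+ n).
Proof. by move=> H Hx; rewrite -mulr_natr; apply: idMr. Qed.

Lemma id_sum I (T : eqType) (s : seq T) (F : T -> A) :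
  is_ideal I -> (forall t, t \in s -> I (F t)) -> I (\sum_(t <- s) F t).
Proof.
move=> H; elim: s => [|t s IH] Hs; first by rewrite big_nil; apply: id0.
rewrite big_cons; apply: idD=> //; first by apply: Hs; rewrite inE eqxx.
by apply: IH=> u Hu; apply: Hs; rewrite inE Hu orbT.
Qed.

Lemma id_sum_ord I n (F : 'I_n -> A) :
  is_ideal I -> (forall i, I (F i)) -> I (\sum_(i < n) F i).
Proof. by move=> H Hs; apply: id_sum. Qed.

Lemma top_ideal : is_ideal top. Proof. by split. Qed.

Lemma colon_ideal K x : is_ideal K -> is_ideal (colon K x).
Proof.
move=> H; split; rewrite /colon.
- by rewrite mul0r; apply: id0.
- by move=> a b Ha Hb; rewrite mulrDl; apply: idD.
- by move=> r a Ha; rewrite -mulrA; apply: idM.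
Qed.

Lemma sumx_ideal K x : is_ideal K -> is_ideal (sumx K x).
Proof.
move=> H; split; rewrite /sumx.
- by exists 0, 0; split; [apply: id0 | rewrite mul0r addr0].
- move=> a b [k [r [Hk ->]]] [k' [r' [Hk' ->]]].
  exists (k + k'), (r + r'); split; first by apply: idD.
  by rewrite mulrDl addrACA.
- move=> c a [k [r [Hk ->]]]; exists (c * k), (c * r); split; first by apply: idM.
  by rewrite mulrDr mulrA.
Qed.

Lemma sub_sumx K x : is_ideal K -> sub K (sumx K x).
Proof. by move=> H k Hk; exists k, 0; rewrite mul0r addr0. Qed.
Lemma sumx_x K x : is_ideal K -> sumx K x x.
Proof. by move=> H; exists 0, 1; rewrite mul1r add0r; split=> //; apply: id0. Qed.

Lemma radD I x y a b : is_ideal I -> I (x ^+ a) -> I (y ^+ b) -> I ((x + y) ^+ (a + b)).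
Proof.
move=> H Hx Hy; rewrite exprDn; apply: id_sum_ord=> // i; apply: idMn=> //.
case: (leqP b i) => hb.
  by apply: idM; [exact: H | exact: (idXle H Hy hb)].
apply: idMr; first exact: H.
apply: (idXle H Hx); have := ltn_ord i; lia.
Qed.
End Ideals.


Definition ind (P : Prop) : nat := if excluded_middle_informative P then 1%nat else 0%nat.
Lemma ind_le1 P : leq (ind P) 1. Proof. by rewrite /ind; case: (excluded_middle_informative P). Qed.
Lemma ind_imp (P Q : Prop) : (P -> Q) -> leq (ind P) (ind Q).
Proof.
rewrite /ind=> H; case: (excluded_middle_informative Q)=> hq; case: (excluded_middle_informative P)=> hp //.
by case: hq; apply: H.
Qed.
Lemma ind_or (P Q R : Prop) : (P -> Q \/ R) -> leq (ind P) (ind Q + ind R).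
Proof.
rewrite /ind=> H; case: (excluded_middle_informative P)=> hp //.
case: (excluded_middle_informative Q)=> hq //; case: (excluded_middle_informative R)=> hr //.
by case: (H hp).
Qed.
Lemma ind_T (P : Prop) : P -> ind P = 1%nat.
Proof. by rewrite /ind; case: (excluded_middle_informative P). Qed.
Lemma ind_F (P : Prop) : ~ P -> ind P = 0%nat.
Proof. by rewrite /ind; case: (excluded_middle_informative P). Qed.

Section Chains.
Variable A : comNzRingType.
Implicit Types (I J K lo hi : A -> Prop) (x y : A) (D : nat -> A -> Prop).

Definition strict D i := exists x, D i.+1 x /\ ~ D i x.
Definition cnt D k := (\sum_(i < k) ind (strict D i))%nat.
Definition inint lo hi k D := forall i, leq i k ->
  [/\ is_ideal (D i), sub lo (D i) & sub (D i) hi].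
Definition monoc k D := forall i, (i < k)%nat -> sub (D i) (D i.+1).
Definition Bnd lo hi N := forall k D, inint lo hi k D -> monoc k D -> leq (cnt D k) N.

Lemma sub_top J : sub J (@top A). Proof. by move=> z _; exact: Logic.I. Qed.

Lemma cntS D k : cnt D k.+1 = (cnt D k + ind (strict D k))%nat.
Proof. by rewrite /cnt big_ord_recr. Qed.

Lemma Bnd_mono lo hi lo' hi' N N' : sub lo' lo -> sub hi hi' -> leq N' N ->
  Bnd lo' hi' N' -> Bnd lo hi N.
Proof.
move=> Hl Hh HN HB k D Hi Hm; apply: leq_trans HN; apply: HB Hm => i Hik.
by case: (Hi i Hik)=> H1 H2 H3; split=> // z Hz; [apply: H2; apply: Hl | apply: Hh; apply: H3].
Qed.

Lemma Bnd_split K K' a b : is_ideal K' -> sub K K' -> Bnd K K' a -> Bnd K' (@top A) b ->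
  Bnd K (@top A) (a + b).
Proof.
move=> HK' HKK' Ha Hb k D Hi Hm.
pose E i := fun z => D i z /\ K' z.
pose F i := fun z => exists d c, D i d /\ K' c /\ z = d + c.
have HE : inint K K' k E.
  move=> i Hik; case: (Hi i Hik)=> H1 H2 H3; split.
  - split; rewrite /E.
    + by split; [apply: id0 | apply: id0].
    + by move=> u v [? ?] [? ?]; split; apply: idD.
    + by move=> r u [? ?]; split; apply: idM.
  - by move=> z Hz; split; [apply: H2 | apply: HKK'].
  - by move=> z [].
have HF : inint K' (@top A) k F.
  move=> i Hik; case: (Hi i Hik)=> H1 H2 H3; split=> //.
  - split; rewrite /F.
    + by exists 0, 0; split; [apply: id0 | split; [apply: id0 | rewrite addr0]].
    + move=> u v [d [c [Hd [Hc ->]]]] [d' [c' [Hd' [Hc' ->]]]].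
      exists (d + d'), (c + c'); split; first by apply: idD.
      by split; [apply: idD | rewrite addrACA].
    + move=> r u [d [c [Hd [Hc ->]]]]; exists (r * d), (r * c).
      by split; [apply: idM | split; [apply: idM | rewrite mulrDr]].
  - by move=> z Hz; exists 0, z; split; [apply: id0 | split=> //; rewrite add0r].
have HmE : monoc k E by move=> i Hik z [Hz Hz']; split=> //; apply: Hm.
have HmF : monoc k F.
  by move=> i Hik z [d [c [Hd [Hc ->]]]]; exists d, c; split=> //; apply: Hm.
apply: leq_trans (leq_add (Ha _ _ HE HmE) (Hb _ _ HF HmF)).
rewrite /cnt -big_split /=; apply: leq_sum=> i _; apply: ind_or=> -[x [Hx1 Hx0]].
apply: NNPP=> Hn; apply: Hx0.
have HiK : leq i k by apply: ltnW.
have Hi1 : leq i.+1 k by [].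
case: (Hi _ HiK)=> Hid _ _; case: (Hi _ Hi1)=> Hid1 _ _.
have nF : forall z, F i.+1 z -> F i z.
  move=> z Hz; apply: NNPP=> Hz'; apply: Hn; right; by exists z.
have nE : forall z, E i.+1 z -> E i z.
  move=> z Hz; apply: NNPP=> Hz'; apply: Hn; left; by exists z.
have [d [c [Hd [Hc Hxe]]]] : F i x by apply: nF; exists x, 0; split=> //; split; [apply: id0 | rewrite addr0].
have Hc1 : E i.+1 c.
  split=> //; have -> : c = x - d by rewrite Hxe addrAC subrr add0r.
  by apply: idB=> //; apply: (Hm i)=> //.
have [Hc2 _] := nE _ Hc1.
by rewrite Hxe; apply: idD.
Qed.

Lemma Bnd_colon K x N : is_ideal K -> Bnd (colon K x) (@top A) N -> Bnd K (sumx K x) N.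
Proof.
move=> HK HB k D Hi Hm.
pose E i := colon (D i) x.
have HE : inint (colon K x) (@top A) k E.
  move=> i Hik; case: (Hi i Hik)=> H1 H2 H3; split=> //; first by apply: colon_ideal.
  by move=> z Hz; apply: H2.
have HmE : monoc k E by move=> i Hik z Hz; apply: Hm.
apply: leq_trans (HB _ _ HE HmE); apply: leq_sum=> i _; apply: ind_imp=> -[y [Hy1 Hy0]].
have HiK : leq i k by apply: ltnW.
case: (Hi _ HiK)=> Hid Hlo _; case: (Hi i.+1 (ltn_ord i))=> Hid1 Hlo1 Hhi1.
have [c [r [Hc Hye]]] := Hhi1 _ Hy1.
exists r; split.
  rewrite /E /colon; have -> : r * x = y - c by rewrite Hye addrAC subrr add0r.
  by apply: idB=> //; apply: Hlo1.
by move=> Hr; apply: Hy0; rewrite Hye; apply: idD=> //; apply: Hlo.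
Qed.

Lemma Bnd_one J : J 1 -> Bnd J (@top A) 0.
Proof.
move=> HJ k D Hi Hm; rewrite leqn0 /cnt; apply/eqP; apply: big1=> i _.
apply: ind_F=> -[y [_ Hy]]; apply: Hy.
have HiK : leq i k by apply: ltnW.
case: (Hi _ HiK)=> Hid Hlo _; apply: id_one=> //; by apply: Hlo.
Qed.

Lemma Bnd_max m J : maximal_ideal m -> sub m J -> Bnd J (@top A) 1.
Proof.
move=> [Hpm Hmax] HmJ k D Hi Hm.
suff : leq (cnt D k) (ind (D k 1)) by move/leq_trans; apply; apply: ind_le1.
elim: k D Hi Hm => [|k IH] D Hi Hm; first by rewrite /cnt big_ord0.
have Hi' : inint J (@top A) k D by move=> i Hik; apply: Hi; apply: leqW.
have Hm' : monoc k D by move=> i Hik; apply: Hm; apply: leqW.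
rewrite cntS; have := IH D Hi' Hm'.
case: (Hi k (leqnSn k))=> Hid HlJ _; case: (Hi k.+1 (leqnn _))=> Hid1 HlJ1 _.
have Hsub := Hm k (ltnSn k).
case: (classic (strict D k)) => Hs.
  rewrite (ind_T Hs); have [y [Hy1 Hy0]] := Hs.
  have nk : ~ D k 1 by move=> H1; apply: Hy0; apply: id_one.
  rewrite (ind_F nk) leqn0=> /eqP->.
  have k1 : D k.+1 1.
    apply: NNPP=> n1; apply: Hy0; apply: (HlJ); apply: (HmJ).
    apply: (Hmax (D k.+1) (conj Hid1 n1)).
      by move=> z Hz; apply: Hsub; apply: HlJ; apply: HmJ.
    exact: Hy1.
  by rewrite (ind_T k1).
rewrite (ind_F Hs) addn0=> /leq_trans; apply; apply: ind_imp; apply: Hsub.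
Qed.

Lemma Bnd_prepend J J' p : is_ideal J -> is_ideal J' -> sub J J' -> (exists x, J' x /\ ~ J x) ->
  Bnd J (@top A) p -> (0 < p)%nat /\ Bnd J' (@top A) p.-1.
Proof.
move=> HJ HJ' HJJ' [x [Hx Hnx]] HB.
have key : forall k D, inint J' (@top A) k D -> monoc k D -> leq (cnt D k).+1 p.
  move=> k D Hi Hm.
  pose D' i := if i is j.+1 then D j else J.
  have Hi' : inint J (@top A) k.+1 D'.
    move=> i0; case: i0 => [|n] Hik /=; first by split; [exact: HJ | move=> z | exact: sub_top].
    case: (Hi n Hik)=> H1 H2 H3; split=> //.
    by move=> z Hz; apply: H2; apply: HJJ'.
  have Hm' : monoc k.+1 D'.
    move=> i0; case: i0 => [|n] Hik /=; last by apply: Hm.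
    by move=> z Hz; case: (Hi 0%nat (leq0n _))=> _ H2 _; apply: H2; apply: HJJ'.
  have := HB _ _ Hi' Hm'; rewrite /cnt big_ord_recl.
  have s0 : strict D' 0 by exists x; split=> //=; case: (Hi 0%nat (leq0n _))=> _ H2 _; apply: H2.
  by rewrite (ind_T s0) add1n.
have p0 : (0 < p)%nat.
  have := key 0%nat (fun _ => J'); rewrite /cnt big_ord0; apply.
  - by move=> i _; split; [exact: HJ' | move=> z | exact: sub_top].
  - by [].
split=> // k D Hi Hm; have := key k D Hi Hm.
by rewrite -{1}(prednK p0) ltnS.
Qed.
End Chains.


Lemma max_exists (P : nat -> Prop) N : P 0%nat -> (forall k, P k -> leq k N) ->
  exists n, P n /\ forall k, P k -> leq k n.
Proof.
move=> P0 HN.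
suff : forall d, (exists n, P n /\ forall k, P k -> leq k n) \/ (exists n, P n /\ leq d n).
  move=> /(_ N.+1) [//|[n [Pn Hn]]]; have := HN _ Pn; lia.
elim=> [|d [L|[n [Pn Hn]]]]; [by right; exists 0%nat | by left |].
case: (classic (exists k, P k /\ leq d.+1 k)) => [H|H]; first by right.
left; exists n; split=> // k Pk; apply: (@leq_trans d)=> //.
apply: NNPP=> Hk; apply: H; exists k; split=> //; lia.
Qed.

Section Compress.
Variable A : comNzRingType.
Implicit Types (I J K lo hi : A -> Prop) (x y : A) (D C : nat -> A -> Prop).

Lemma compress lo k D : inint lo (@top A) k D -> monoc k D ->
  exists C, ideal_chain lo (cnt D k) C /\ sub (C (cnt D k)) (D k) /\ sub (D k) (C (cnt D k)).
Proof.
elim: k D => [|k IH] D Hi Hm.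
  rewrite /cnt big_ord0; exists D; split=> //; split=> // i Hi0.
  by case: (Hi i Hi0).
have Hi' : inint lo (@top A) k D by move=> i Hik; apply: Hi; apply: leqW.
have Hm' : monoc k D by move=> i Hik; apply: Hm; apply: leqW.
have [C [[HC1 HC2] [Hs1 Hs2]]] := IH D Hi' Hm'.
have Hsub := Hm k (ltnSn k).
case: (Hi k.+1 (leqnn _)) => Hid1 Hlo1 _.
rewrite cntS; set s := cnt D k in HC1 HC2 Hs1 Hs2 *.
case: (classic (strict D k)) => Hst.
  rewrite (ind_T Hst) addn1.
  exists (fun i => if leq i s then C i else D k.+1); split; last first.
    by rewrite ltnn; split.
  split.
    move=> i Hi0; case: ifP => His; first by apply: HC1.
    by split.
  move=> i Hi0; case: (boolP (leq i.+1 s)) => His1.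
    have His : leq i s by apply: ltnW.
    by rewrite His; apply: HC2.
  have ei : i = s by move: Hi0 His1; lia.
  rewrite ei leqnn; split.
    by move=> z Hz; apply: Hsub; apply: Hs1.
  have [y [Hy1 Hy0]] := Hst; exists y; split=> // Hy; apply: Hy0; apply: Hs1.
  done.
rewrite (ind_F Hst) addn0; exists C; split; first by split.
split; first by move=> z Hz; apply: Hsub; apply: Hs1.
move=> z Hz; apply: Hs2; apply: NNPP=> Hz'; apply: Hst; by exists z.
Qed.

Lemma chain_cnt lo n C : ideal_chain lo n C ->
  [/\ inint lo (@top A) n C, monoc n C & cnt C n = n].
Proof.
move=> [H1 H2]; split.
- by move=> i Hi; case: (H1 i Hi)=> ? ?; split=> //; exact: sub_top.
- by move=> i Hi; case: (H2 i Hi).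
- rewrite /cnt (eq_bigr (fun _ => 1%nat)); first by rewrite sum_nat_const card_ord muln1.
  by move=> i _; apply: ind_T; case: (H2 i (ltn_ord i)).
Qed.

Lemma qli_bnd lo n : quotient_length_is lo n -> Bnd lo (@top A) n.
Proof.
move=> [_ Hmax] k D Hi Hm; have [C [HC _]] := compress Hi Hm.
exact: Hmax HC.
Qed.

Lemma qli_le lo n N : quotient_length_is lo n -> Bnd lo (@top A) N -> leq n N.
Proof.
move=> [[C HC] _] HB; case: (chain_cnt HC)=> Hi Hm Hc.
by rewrite -Hc; apply: HB.
Qed.

Lemma chain_le lo n C N : ideal_chain lo n C -> Bnd lo (@top A) N -> leq n N.
Proof.
move=> HC HB; case: (chain_cnt HC)=> Hi Hm Hc.
by rewrite -Hc; apply: HB.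
Qed.

Lemma qli_exists lo N : is_ideal lo -> Bnd lo (@top A) N -> exists n, quotient_length_is lo n.
Proof.
move=> Hlo HB.
have H0 : exists C, ideal_chain lo 0 C.
  exists (fun _ => lo); split=> [i _|i Hi] //.
have HN : forall k, (exists C, ideal_chain lo k C) -> leq k N.
  by move=> k [C HC]; apply: chain_le HC HB.
have [n [Pn Hn]] := @max_exists (fun k => exists C, ideal_chain lo k C) N H0 HN.
exists n; split=> // k C HC; apply: Hn; by exists C.
Qed.

Lemma qli_unique lo n n' : quotient_length_is lo n -> quotient_length_is lo n' -> n = n'.
Proof.
move=> H H'; apply/eqP; rewrite eqn_leq (qli_le H (qli_bnd H')) (qli_le H' (qli_bnd H)).
done.
Qed.

Lemma qli_pos lo n : is_ideal lo -> ~ lo 1 -> quotient_length_is lo n -> (0 < n)%nat.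
Proof.
move=> Hlo H1 [_ Hmax].
apply: (Hmax 1%nat (fun i => if i is 0%nat then lo else @top A)).
split.
  move=> i0 Hi; split; first by case: i0 Hi=> [|i] Hi //=; exact: top_ideal.
  by case: i0 Hi=> [|i] Hi //= z.
move=> i0 Hi; case: i0 Hi=> [|i] Hi //=; split; first by move=> z; exact: sub_top.
exists 1; split=> //.
Qed.
End Compress.


Lemma step_exists (Q : nat -> Prop) k : ~ Q 0%nat -> Q k -> exists j, ~ Q j /\ Q j.+1.
Proof.
move=> H0; elim: k => [|k IH] Hk; first by [].
case: (classic (Q k)) => Hq; [by apply: IH | by exists k].
Qed.

Section Local.
Variable A : comNzRingType.
Implicit Types (I J K M m : A -> Prop) (x y : A).

Lemma noeth_max (P : (A -> Prop) -> Prop) I0 : noetherian A -> (forall I, P I -> is_ideal I) ->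
  P I0 -> exists M, [/\ P M, sub I0 M & forall J, P J -> sub M J -> sub J M].
Proof.
move=> HN HPi HP0; apply: NNPP=> Hno.
have Hstep : forall M, P M -> sub I0 M -> exists J, P J /\ sub I0 J /\ sub M J /\ ~ sub J M.
  move=> M PM HM; apply: NNPP=> Hn; apply: Hno; exists M; split=> // J PJ HMJ.
  apply: NNPP=> HJM; apply: Hn; exists J; split=> //; split=> //.
  by move=> z Hz; apply: HMJ; apply: HM.
pose next M := epsilon (inhabits M) (fun J => P J /\ sub I0 J /\ sub M J /\ ~ sub J M).
pose C n := iter n next I0.
have HC : forall n, P (C n) /\ sub I0 (C n).
  elim=> [|n [Pn Hn]] /=; first by split.
  have := epsilon_spec (inhabits (C n)) _ (Hstep _ Pn Hn).
  by move=> [? [? _]].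
have HCs : forall n, sub (C n) (C n.+1) /\ ~ sub (C n.+1) (C n).
  move=> n; case: (HC n) => Pn Hn.
  have := epsilon_spec (inhabits (C n)) _ (Hstep _ Pn Hn).
  by move=> [_ [_ [? ?]]].
have [N HNn] := HN C (fun n => HPi _ (proj1 (HC n))) (fun n => proj1 (HCs n)).
by case: (HCs N) => _; apply; apply: HNn.
Qed.

Lemma local_eq m : local_ring A -> maximal_ideal m -> forall m', maximal_ideal m' -> m' = m.
Proof.
move=> [m0 [Hm0 Hu]] Hm m' Hm'; apply: functional_extensionality=> z.
apply: propositional_extensionality; rewrite (Hu _ Hm' z); symmetry; exact: Hu.
Qed.

Lemma max_proper m : maximal_ideal m -> ~ m 1. Proof. by case=> -[]. Qed.
Lemma max_ideal m : maximal_ideal m -> is_ideal m. Proof. by case=> -[]. Qed.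

Lemma unit_of m x : noetherian A -> local_ring A -> maximal_ideal m -> ~ m x ->
  exists u, u * x = 1.
Proof.
move=> HN HL Hm Hx; apply: NNPP=> Hno.
pose I0 := fun y => exists r, y = r * x.
have HI0 : Defs.proper_ideal I0.
  split; last by move=> [r Hr]; apply: Hno; exists r.
  split; rewrite /I0.
  - by exists 0; rewrite mul0r.
  - by move=> a b [r ->] [s ->]; exists (r + s); rewrite mulrDl.
  - by move=> c a [r ->]; exists (c * r); rewrite mulrA.
have [M [HM HI0M Hmax]] := @noeth_max _ _ HN (fun I (H : Defs.proper_ideal I) => proj1 H) HI0.
have HMm : maximal_ideal M by split.
rewrite -(local_eq HL Hm HMm) in Hx; apply: Hx; apply: HI0M; exists 1; by rewrite mul1r.
Qed.

Lemma max_prime m x k : noetherian A -> local_ring A -> maximal_ideal m -> m (x ^+ k) -> m x.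
Proof.
move=> HN HL Hm Hk; apply: NNPP=> Hx; have [u Hu] := unit_of HN HL Hm Hx.
apply: (max_proper Hm); rewrite -(expr1n _ k) -Hu exprMn.
by apply: idM=> //; exact: max_ideal.
Qed.

Lemma rad_mono m I I' : radm m I -> sub I I' -> radm m I'.
Proof. by move=> H HI z Hz; have [k Hk] := H z Hz; exists k; apply: HI. Qed.

Lemma annih b J : noetherian A -> local_ring A -> maximal_ideal b -> is_ideal J ->
  radm b J -> ~ J 1 -> exists x, ~ J x /\ forall y, b y -> J (y * x).
Proof.
move=> HN HL Hb HJ Hr HJ1.
pose P I := [/\ is_ideal I, ~ I 1 & exists x, forall c, I c <-> J (c * x)].
have P0 : P J by split=> //; exists 1=> c; rewrite mulr1.
have [M [[HMi HM1 [x Hx]] HJM Hmax]] := @noeth_max _ _ HN (fun I (H : P I) => let: And3 h _ _ := H in h) P0.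
exists x; split; first by move=> Jx; apply: HM1; apply/Hx; rewrite mul1r.
move=> y Hy; apply/Hx; apply: NNPP=> HyM.
have [k Hk] := Hr y Hy.
have Hne : ~ M (y ^+ 0) by rewrite expr0.
have [j [Hj0 Hj1]] := @step_exists (fun j => M (y ^+ j)) k Hne (HJM _ Hk).
pose M' := colon M (y ^+ j).
have PM' : P M'.
  split; first exact: colon_ideal.
    by rewrite /M' /colon mul1r.
  exists (y ^+ j * x)=> c; rewrite /M' /colon mulrA; exact: Hx.
have HMM' : sub M M' by move=> z Hz; rewrite /M' /colon; apply: idMr.
apply: HyM; apply: (Hmax _ PM' HMM'); rewrite /M' /colon -exprS; exact: Hj1.
Qed.

Lemma finite_len m J : noetherian A -> local_ring A -> maximal_ideal m -> is_ideal J ->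
  radm m J -> exists N, Bnd J (@top A) N.
Proof.
move=> HN HL Hm HJ Hr; apply: NNPP=> Hno.
pose P I := [/\ is_ideal I, radm m I & ~ exists N, Bnd I (@top A) N].
have P0 : P J by split.
have [M [[HMi HMr HMb] HJM Hmax]] := @noeth_max _ _ HN (fun I (H : P I) => let: And3 h _ _ := H in h) P0.
case: (classic (M 1)) => HM1; first by apply: HMb; exists 0%nat; exact: Bnd_one.
case: (classic (sub m M)) => HmM; first by apply: HMb; exists 1%nat; exact: Bnd_max Hm HmM.
have [y [Hy HyM]] : exists y, m y /\ ~ M y.
  apply: NNPP=> H; apply: HmM=> z Hz; apply: NNPP=> Hz'; apply: H; by exists z.
have [k Hk] := HMr y Hy.
have Hne : ~ M (y ^+ 0) by rewrite expr0.
have [j [Hj0 Hj1]] := @step_exists (fun j => M (y ^+ j)) k Hne Hk.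
set x := y ^+ j in Hj0 Hj1.
have HM1' : sub M (colon M x) by move=> z Hz; rewrite /colon; apply: idMr.
have HM2' : sub M (sumx M x) by apply: sub_sumx.
have [N1 HN1] : exists N, Bnd (colon M x) (@top A) N.
  apply: NNPP=> Hn.
  have := Hmax (colon M x) (And3 (colon_ideal x HMi) (rad_mono HMr HM1') Hn) HM1' y.
  by rewrite /colon /x -exprS; move=> /(_ Hj1).
have [N2 HN2] : exists N, Bnd (sumx M x) (@top A) N.
  apply: NNPP=> Hn.
  have := Hmax (sumx M x) (And3 (sumx_ideal x HMi) (rad_mono HMr HM2') Hn) HM2' x.
  by move=> /(_ (sumx_x x HMi)).
apply: HMb; exists (N1 + N2)%nat.
apply: (Bnd_split (sumx_ideal x HMi) HM2' _ HN2); exact: Bnd_colon.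
Qed.
End Local.


Definition rh (A B : comNzRingType) (h : A -> B) :=
  [/\ forall x y, h (x + y) = h x + h y, forall x y, h (x * y) = h x * h y, h 0 = 0 & h 1 = 1].

Lemma rh_rmorph (A B : comNzRingType) (h : {rmorphism A -> B}) : rh h.
Proof. by split; [apply: rmorphD | apply: rmorphM | apply: rmorph0 | apply: rmorph1]. Qed.

Lemma rh_comp (A B C : comNzRingType) (g : A -> B) (h : B -> C) : rh g -> rh h -> rh (h \o g).
Proof.
move=> [g1 g2 g3 g4] [h1 h2 h3 h4]; split=> /=.
- by move=> x y; rewrite g1 h1.
- by move=> x y; rewrite g2 h2.
- by rewrite g3 h3.
- by rewrite g4 h4.
Qed.

Lemma rh_iter (A : comNzRingType) (g : A -> A) n : rh g -> rh (iter n g).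
Proof.
move=> Hg; elim: n => [|n IH]; first by split.
have -> : iter n.+1 g = g \o iter n g by apply: functional_extensionality=> z; rewrite iterS.
exact: rh_comp.
Qed.

Lemma rh_sum (A B : comNzRingType) (h : A -> B) (T : Type) (s : seq T) (F : T -> A) :
  rh h -> h (\sum_(t <- s) F t) = \sum_(t <- s) h (F t).
Proof.
move=> [h1 _ h3 _]; elim: s => [|t s IH]; first by rewrite !big_nil.
by rewrite !big_cons h1 IH.
Qed.

Section Ext.
Variables A B : comNzRingType.
Implicit Types (I J K : A -> Prop) (L : B -> Prop) (g : A -> B).

Lemma ext_is_ideal g I : is_ideal (ext_ideal g I).
Proof.
split; rewrite /ext_ideal.
- by exists [::]; rewrite big_nil; split=> // p; rewrite in_nil.
- move=> u v [s [Hs ->]] [s' [Hs' ->]]; exists (s ++ s'); rewrite big_cat; split=> // p.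
  by rewrite mem_cat=> /orP [] ?; [apply: Hs | apply: Hs'].
- move=> r u [s [Hs ->]]; exists (map (fun p => (r * p.1, p.2)) s); split.
    by move=> p /mapP [q Hq ->]; exact: Hs q Hq.
  elim: s {Hs} => [|p s IH]; first by rewrite !big_nil mulr0.
  by rewrite /= !big_cons mulrDr IH mulrA.
Qed.

Lemma ext_in g I a : I a -> ext_ideal g I (g a).
Proof. by move=> Ha; exists [:: (1, a)]; rewrite big_seq1 mul1r; split=> // p; rewrite inE=> /eqP->. Qed.

Lemma ext_min g I L : is_ideal L -> (forall a, I a -> L (g a)) -> sub (ext_ideal g I) L.
Proof.
move=> HL HI y [s [Hs ->]]; apply: id_sum=> // p Hp; apply: idM=> //; exact: HI (Hs p Hp).
Qed.

Lemma ext_mono g I I' : sub I I' -> sub (ext_ideal g I) (ext_ideal g I').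
Proof. by move=> H; apply: ext_min; [exact: ext_is_ideal | move=> a Ha; apply: ext_in; apply: H]. Qed.

Lemma ext_radm g I L : is_ideal L -> (forall a, I a -> exists e, L (g a ^+ e)) ->
  forall y, ext_ideal g I y -> exists N, L (y ^+ N).
Proof.
move=> HL HI y [s [Hs ->]]; elim: s Hs => [|p s IH] Hs.
  by exists 1%nat; rewrite big_nil expr1; apply: id0.
have [e He] := HI _ (Hs p (mem_head _ _)).
have [N HN] : exists N, L ((\sum_(p <- s) p.1 * g p.2) ^+ N).
  by apply: IH=> q Hq; apply: Hs; rewrite inE Hq orbT.
rewrite big_cons; exists (e + N)%nat; apply: radD=> //.
by rewrite exprMn; apply: idM.
Qed.
End Ext.

Lemma ext_comp (A B C : comNzRingType) (g : A -> B) (h : B -> C) I : rh h ->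
  sub (ext_ideal h (ext_ideal g I)) (ext_ideal (h \o g) I).
Proof.
move=> Hh; apply: ext_min; first exact: ext_is_ideal.
move=> y [s [Hs ->]]; rewrite rh_sum //; apply: id_sum; first exact: ext_is_ideal.
move=> p Hp; case: Hh => _ h2 _ _; rewrite h2; apply: idM; first exact: ext_is_ideal.
by apply: (@ext_in _ _ (h \o g)); apply: Hs.
Qed.

Lemma ext_comp' (A B C : comNzRingType) (g : A -> B) (h : B -> C) I :
  sub (ext_ideal (h \o g) I) (ext_ideal h (ext_ideal g I)).
Proof.
apply: ext_min; first exact: ext_is_ideal.
by move=> a Ha /=; apply: ext_in; apply: ext_in.
Qed.

Lemma ext_eqfun (A B : comNzRingType) (g g' : A -> B) I : (forall x, g x = g' x) ->
  ext_ideal g I = ext_ideal g' I.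
Proof. by move=> H; have -> : g = g' by apply: functional_extensionality. Qed.

Lemma radm_comp (A B C : comNzRingType) (g : A -> B) (h : B -> C) a b c : rh h ->
  radm b (ext_ideal g a) -> radm c (ext_ideal h b) -> radm c (ext_ideal (h \o g) a).
Proof.
move=> Hh Hg Hhc z Hz; have [k Hk] := Hhc z Hz.
have HI : forall b0, b b0 -> exists e, ext_ideal (h \o g) a (h b0 ^+ e).
  move=> b0 Hb0; have [e He] := Hg b0 Hb0; exists e.
  have := @ext_in _ _ h _ _ He.
  have Hexp : forall u n, h (u ^+ n) = h u ^+ n.
    case: Hh=> _ h2 _ h4.
    by move=> u; elim=> [|n IH]; rewrite ?expr0 ?h4 // !exprS h2 IH.
  by rewrite Hexp=> H; apply: ext_comp.
have [N HN] := ext_radm (ext_is_ideal _ _) HI Hk.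
by exists (k * N)%nat; rewrite exprM.
Qed.

Section Submult.
Variables B C : comNzRingType.
Variable h : B -> C.
Hypothesis Hh : rh h.

Lemma submult b q : noetherian B -> local_ring B -> maximal_ideal b ->
  Bnd (ext_ideal h b) (@top C) q ->
  forall p J, is_ideal J -> radm b J -> Bnd J (@top B) p -> Bnd (ext_ideal h J) (@top C) (p * q).
Proof.
move=> HN HL Hb Hq; elim=> [|p IH] J HJ HJr HJp.
  case: (classic (J 1)) => HJ1.
    rewrite mul0n; apply: Bnd_one; case: Hh=> _ _ _ <-; exact: ext_in.
  have [x [Hx _]] := annih HN HL Hb HJ HJr HJ1.
  have := Bnd_prepend HJ (sumx_ideal x HJ) (sub_sumx x HJ) _ HJp.
  by case; [exists x; split=> //; exact: sumx_x | ].
case: (classic (J 1)) => HJ1.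
  apply: (Bnd_mono (lo' := ext_ideal h J) (hi' := @top C) (N' := 0%nat)) => //.
  apply: Bnd_one; case: Hh=> _ _ _ <-; exact: ext_in.
have [x [Hx Hxb]] := annih HN HL Hb HJ HJr HJ1.
set J' := sumx J x.
have HJ' : is_ideal J' by exact: sumx_ideal.
have [_ HJ'p] := Bnd_prepend HJ HJ' (sub_sumx x HJ) (ex_intro _ x (conj (sumx_x x HJ) Hx)) HJp.
have := IH J' HJ' (rad_mono HJr (sub_sumx x HJ)) HJ'p => /= IHp.
set K := ext_ideal h J.
have HK : is_ideal K by exact: ext_is_ideal.
have HK' : is_ideal (sumx K (h x)) by exact: sumx_ideal.
have HKK' : sub K (sumx K (h x)) by exact: sub_sumx.
rewrite mulSn; apply: (Bnd_split HK' HKK').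
  apply: Bnd_colon=> //; apply: (Bnd_mono _ _ (leqnn _) Hq)=> //.
  apply: ext_min; first exact: colon_ideal.
  move=> a Ha; rewrite /colon; case: Hh=> _ h2 _ _; rewrite -h2; apply: ext_in; exact: Hxb.
apply: (Bnd_mono _ _ (leqnn _) IHp)=> //.
apply: ext_min=> // a [k [r [Hk ->]]]; case: Hh=> h1 h2 _ _; rewrite h1 h2.
exists (h k), (h r); split=> //; exact: ext_in.
Qed.
End Submult.

Section FF.
Variables A B : comNzRingType.
Variable f : {rmorphism A -> B}.
Variables (m : A -> Prop) (n : B -> Prop).
Hypotheses (HNA : noetherian A) (HLA : local_ring A) (Hm : maximal_ideal m) (Hn : maximal_ideal n)
  (Hloc : forall x, m x -> n (f x)) (Hflat : flat_via f).

Lemma ff J x : is_ideal J -> ext_ideal f J (f x) -> J x.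
Proof.
move=> HJ [s [Hs Hfx]].
set r := size s.
pose fv := fun i : 'I_r.+1 => nth x (x :: map snd s) i.
pose xv := fun i : 'I_r.+1 => nth 0 (1 :: map (fun p => - p.1) s) i.
have Heq : \sum_(i < r.+1) f (fv i) * xv i = 0.
  rewrite big_ord_recl /fv /xv /= mulr1.
  rewrite Hfx (big_nth (0, 0)) big_mkord -/r -big_split; apply: big1=> i _.
  rewrite add0n (nth_map (0, 0)) ?ltn_ord // (nth_map (0, 0)) ?ltn_ord //.
  by rewrite mulrN mulrC; exact: subrr.
have [m' [a [y [Hxy Hrel]]]] := Hflat Heq.
have H1 : 1 = \sum_(j < m') f (a ord0 j) * y j by rewrite -Hxy.
have [j Hj] : exists j, ~ m (a ord0 j).
  apply: NNPP=> Hno; apply: (max_proper Hn); rewrite H1; apply: id_sum_ord; first exact: max_ideal.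
  move=> j; apply: idMr; first exact: max_ideal.
  apply: Hloc; apply: NNPP=> Hj; apply: Hno; by exists j.
have [u Hu] := unit_of HNA HLA Hm Hj.
have := Hrel j; rewrite big_ord_recl /fv /= => Hr.
have Hxa : J (x * a ord0 j).
  move/eqP: Hr; rewrite addr_eq0 => /eqP ->.
  apply: idN=> //; apply: id_sum_ord=> // i; apply: idMr=> //.
  rewrite add0n (nth_map (0, 0)) ?ltn_ord //; apply: Hs; exact: mem_nth.
by rewrite -[x]mulr1 -Hu mulrCA; apply: idM.
Qed.

Lemma ff_chain lo k C : ideal_chain lo k C ->
  ideal_chain (ext_ideal f lo) k (fun i => ext_ideal f (C i)).
Proof.
move=> [H1 H2]; split.
  move=> i Hi; split; first exact: ext_is_ideal.
  by apply: ext_mono; case: (H1 i Hi).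
move=> i Hi; case: (H2 i Hi) => Hs [x [Hx1 Hx0]]; split; first exact: ext_mono.
exists (f x); split; first exact: ext_in.
move=> H; apply: Hx0; apply: ff=> //; case: (H1 i (ltnW Hi)) => //.
Qed.
End FF.


Lemma hl_qli (A B : comNzRingType) (g : A -> B) a b : local_ring A -> maximal_ideal a ->
  noetherian B -> local_ring B -> maximal_ideal b -> radm b (ext_ideal g a) ->
  quotient_length_is (ext_ideal g a) (hom_length g).
Proof.
move=> HLA Ha HNB HLB Hb Hr.
have [N HN] := finite_len HNB HLB Hb (ext_is_ideal g a) Hr.
have [n0 Hn0] := qli_exists (ext_is_ideal g a) HN.
have Hex : exists n, exists a' : A -> Prop, maximal_ideal a' /\ quotient_length_is (ext_ideal g a') n.
  by exists n0, a.
have [a' [Ha' Hq]] := epsilon_spec (inhabits O) _ Hex.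
by rewrite -(local_eq HLA Ha Ha').
Qed.

Lemma INR_ge1 k : (0 < k)%nat -> (1 <= INR k)%R.
Proof. by move=> Hk; rewrite -[1%R]/(INR 1); apply: le_INR; apply/leP. Qed.

Lemma INR_leM a b c : leq a (b * c) -> (INR a <= INR b * INR c)%R.
Proof. by move/leP; rewrite -multE => H; rewrite -mult_INR; apply: le_INR. Qed.

Theorem mainTheorem7 (A B : comNzRingType) (f : {rmorphism A -> B})
    (phi : {rmorphism A -> A}) (psi : {rmorphism B -> B})
    (HA : noetherian_local A) (HB : noetherian_local B)
    (Hflat : flat_via f) (Hf : finite_length_hom f)
    (Hphi : self_map_finite_length phi)
    (Hcomm : forall x : A, psi (f x) = f (phi x)) :
  self_map_finite_length psi /\ h_alg phi = h_alg psi.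
Proof.
case: HA => HNA HLA; case: HB => HNB HLB.
have [m [Hm _]] := HLA; have [n [Hn _]] := HLB.
have [Hfl Hfp] := Hf m n Hm Hn.
case: Hfp => Hfprop _ Hfrad.
have radf : radm n (ext_ideal f m) by move=> x /Hfrad.
have [Hpl Hpp] := Hphi m m Hm Hm.
case: Hpp => Hpprop _ Hprad.
have radphi : radm m (ext_ideal phi m) by move=> x /Hprad.
have rf := rh_rmorph f; have rphi := rh_rmorph phi; have rpsi := rh_rmorph psi.
have Hcommk : forall k x, iter k psi (f x) = f (iter k phi x).
  by elim=> [|k IH] x //=; rewrite IH Hcomm.
have psiloc : forall x, n x -> n (psi x).
  move=> x Hx; have [k Hk] := radf x Hx.
  pose L y := n (psi y).
  have HL : is_ideal L.
    split; rewrite /L.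
    - by rewrite rmorph0; apply: id0; exact: max_ideal.
    - by move=> u v Hu Hv; rewrite rmorphD; apply: idD=> //; exact: max_ideal.
    - by move=> r u Hu; rewrite rmorphM; apply: idM=> //; exact: max_ideal.
  have Hsub : sub (ext_ideal f m) L.
    apply: ext_min=> // a Ha; rewrite /L Hcomm; apply: Hfl; exact: Hpl.
  have := Hsub _ Hk; rewrite /L rmorphXn => H.
  exact: max_prime HNB HLB Hn H.
have radpsi : radm n (ext_ideal psi n).
  have H1 := radm_comp rf radphi radf.
  rewrite -(@ext_eqfun _ _ (psi \o f)) in H1; last by move=> x /=; rewrite Hcomm.
  apply: rad_mono H1 _; apply: ext_min; first exact: ext_is_ideal.
  by move=> a Ha /=; apply: ext_in; exact: Hfl.
have psisub : sub (ext_ideal psi n) n by apply: ext_min=> //; exact: max_ideal.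
have psifin : self_map_finite_length psi.
  move=> a b Ha Hb; rewrite (local_eq HLB Hn Ha) (local_eq HLB Hn Hb); split=> //.
  split.
  - split; first exact: ext_is_ideal.
    by move=> H1; apply: (max_proper Hn); apply: psisub.
  - move=> x y Hxy; case: (classic (n y)) => Hy; first by right; exact: radpsi.
    left; have [u Hu] := unit_of HNB HLB Hn Hy.
    by rewrite -[x]mulr1 -Hu mulrCA; apply: idM=> //; exact: ext_is_ideal.
  - move=> x; split; first exact: radpsi.
    by move=> [k Hk]; apply: (max_prime HNB HLB Hn (k := k)); apply: psisub.
split=> //.
have radphik : forall k, radm m (ext_ideal (iter k phi) m).
  elim=> [|k IH].
    by move=> x Hx; exists 1%nat; rewrite expr1; exact: (@ext_in _ _ (iter 0 phi)).
  have -> : iter k.+1 phi = iter k phi \o phi by apply: functional_extensionality=> z; rewrite iterSr.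
  exact: radm_comp (rh_iter k rphi) radphi IH.
have radpsik : forall k, radm n (ext_ideal (iter k psi) n).
  elim=> [|k IH].
    by move=> x Hx; exists 1%nat; rewrite expr1; exact: (@ext_in _ _ (iter 0 psi)).
  have -> : iter k.+1 psi = iter k psi \o psi by apply: functional_extensionality=> z; rewrite iterSr.
  exact: radm_comp (rh_iter k rpsi) radpsi IH.
have locphik : forall k x, m x -> m (iter k phi x).
  by elim=> [|k IH] x Hx //=; apply: Hpl; apply: IH.
have locpsik : forall k x, n x -> n (iter k psi x).
  by elim=> [|k IH] x Hx //=; apply: psiloc; apply: IH.
have qf := hl_qli HLA Hm HNB HLB Hn radf.
have qphi : forall k, quotient_length_is (ext_ideal (iter k phi) m) (hom_length (iter k phi)).
  by move=> k; exact: (hl_qli HLA Hm HNA HLA Hm (radphik k)).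
have qpsi : forall k, quotient_length_is (ext_ideal (iter k psi) n) (hom_length (iter k psi)).
  by move=> k; exact: (hl_qli HLB Hn HNB HLB Hn (radpsik k)).
have Heqk : forall k, ext_ideal (iter k psi \o f) m = ext_ideal (f \o iter k phi) m.
  by move=> k; apply: ext_eqfun=> x /=; rewrite Hcommk.
have bound1 : forall k, leq (hom_length (iter k psi)) (hom_length (iter k phi) * hom_length f).
  move=> k; apply: (qli_le (qpsi k)).
  have Hs := submult rf HNA HLA Hm (qli_bnd qf) (ext_is_ideal _ _) (radphik k) (qli_bnd (qphi k)).
  apply: (Bnd_mono _ _ (leqnn _) Hs) => // z Hz.
  have := ext_comp rf Hz; rewrite -Heqk; apply: ext_min; first exact: ext_is_ideal.
  by move=> a Ha /=; apply: ext_in; exact: Hfl.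
have bound2 : forall k, leq (hom_length (iter k phi)) (hom_length f * hom_length (iter k psi)).
  move=> k; case: (qphi k) => [[C HC] _].
  have HC' := ff_chain HNA HLA Hm Hn Hfl Hflat HC.
  apply: (chain_le HC').
  have Hs := submult (rh_iter k rpsi) HNB HLB Hn (qli_bnd (qpsi k)) (ext_is_ideal _ _) radf (qli_bnd qf).
  apply: (Bnd_mono _ _ (leqnn _) Hs) => // z Hz.
  have := ext_comp (rh_iter k rpsi) Hz; rewrite Heqk; exact: ext_comp'.
have pos_f : (0 < hom_length f)%nat.
  by apply: (qli_pos (ext_is_ideal _ _) _ qf); case: Hfprop.
have pos_phi : forall k, (0 < hom_length (iter k phi))%nat.
  move=> k; apply: (qli_pos (ext_is_ideal _ _) _ (qphi k)) => H1; apply: (max_proper Hm).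
  by apply: (ext_min (max_ideal Hm) (locphik k)).
have pos_psi : forall k, (0 < hom_length (iter k psi))%nat.
  move=> k; apply: (qli_pos (ext_is_ideal _ _) _ (qpsi k)) => H1; apply: (max_proper Hn).
  by apply: (ext_min (max_ideal Hn) (locpsik k)).
rewrite /h_alg; f_equal; apply: functional_extensionality=> h; apply: propositional_extensionality.
split; apply: cv_transfer; try (move=> k; apply: INR_ge1; by [apply: pos_phi | apply: pos_psi]);
  try (apply: INR_ge1; exact: pos_f).
- move=> k; rewrite Rmult_comm; apply: INR_leM; exact: bound1.
- move=> k; apply: INR_leM; exact: bound2.
- move=> k; apply: INR_leM; exact: bound2.
- move=> k; rewrite Rmult_comm; apply: INR_leM; exact: bound1.
Qed.
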